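(* Let $X$ be a complex manifold, $\omega$ a Hermitian metric and $\gamma$ a smooth real $(1,1)$-form on $X$. For any bidegree $(p,q)$ and any $C^\infty$ family $(\alpha_t)_{t\in(-\varepsilon,\varepsilon)}$ of smooth $(p,q)$-forms, with $\varepsilon>0$ so small that $\omega+t\gamma>0$ for all $t\in(-\varepsilon,\varepsilon)$, $$\frac{d}{dt}\Big|_{t=0}\big(\Lambda_{\omega+t\gamma}\alpha_t\big)=\Lambda_\omega\Big(\frac{d\alpha_t}{dt}\Big|_{t=0}\Big)-(\gamma\wedge\cdot)^\star_\omega\,\alpha_0.$$
   Context: Hermitian metrics are smooth positive definite real $(1,1)$-forms. For a Hermitian metric $\rho$, $\Lambda_\rho$ is the adjoint of $\rho\wedge\cdot$ with respect to the pointwise inner product induced by $\rho$; $(\gamma\wedge\cdot)^\star_\omega$ is the adjoint of multiplication by $\gamma$ with respect to the pointwise inner product induced by $\omega$. *)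

(* Defs.v *)
(* Pointwise (linear-algebraic) model of
   complex-valued differential forms at a point of an n-dimensional complex
   manifold. *)
From mathcomp Require Import all_boot all_algebra.
From mathcomp Require Import complex.
From mathcomp Require Import all_classical all_reals all_analysis.
Set Implicit Arguments. Unset Strict Implicit. Unset Printing Implicit Defensive.
Import GRing.Theory Num.Theory.
Local Open Scope ring_scope.

Section Forms.
Variables (R : realType) (n : nat).

(* A complex-valued form at a point of C^n (all bidegrees at once):
   [a I J] is the coefficient of dz_I /\ dzbar_J, where
   dz_I = dz_{i1} /\ ... /\ dz_{ip} for I = {i1 < ... < ip}. *)
Definition cform := {set 'I_n} -> {set 'I_n} -> R[i].

Definition is_pq_form (p q : nat) (a : cform) : Prop :=
  forall I J, a I J != 0 -> #|I| = p /\ #|J| = q.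

(* sign of the shuffle bringing the increasing tuple A followed by the
   increasing tuple B into increasing order (A, B disjoint) *)
Definition shsign (A B : {set 'I_n}) : R[i] :=
  (-1) ^+ #|[set xy : 'I_n * 'I_n | [&& xy.1 \in A, xy.2 \in B & (val xy.2 < val xy.1)%N]]|.

Definition wedge (a b : cform) : cform := fun I J =>
  \sum_(I1 : {set 'I_n} | I1 \subset I) \sum_(J1 : {set 'I_n} | J1 \subset J)
    shsign I1 (I :\: I1) * shsign J1 (J :\: J1)
    * (-1) ^+ (#|J1| * #|I :\: I1|) * a I1 J1 * b (I :\: I1) (J :\: J1).

(* the (1,1)-cform  i * \sum_{j,k} h_{jk} dz_j /\ dzbar_k  *)
Definition form11 (h : 'M[R[i]]_n) : cform := fun I J =>
  \sum_(j : 'I_n) \sum_(k : 'I_n)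
    (if (I == [set j]) && (J == [set k]) then 'i * h j k else 0).

(* h is a Hermitian matrix: form11 h is then a real (1,1)-cform *)
Definition is_hermitian (h : 'M[R[i]]_n) : Prop :=
  forall j k, h k j = (h j k)^*.

(* h is positive definite: form11 h is then a Hermitian metric *)
Definition is_posdef (h : 'M[R[i]]_n) : Prop :=
  forall v : 'I_n -> R[i], (exists j, v j != 0) ->
    0 < \sum_(j : 'I_n) \sum_(k : 'I_n) h j k * v j * (v k)^*.

(* determinant of the minor of G with rows I and columns K (0 if sizes differ) *)
Definition subdet (G : 'M[R[i]]_n) (I K : {set 'I_n}) : R[i] :=
  match #|I| =P #|K| with
  | ReflectT e =>
      \det (\matrix_(a < #|I|, b < #|I|)
              G (enum_val a) (enum_val (cast_ord e b)))
  | ReflectF _ => 0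
  end.

(* pointwise Hermitian inner product on forms induced by the metric
   omega = i \sum h_{jk} dz_j /\ dzbar_k :
   <dz_j, dz_k> = (h^-1)_{kj},  <dzbar_j, dzbar_k> = (h^-1)_{jk},
   dz's orthogonal to dzbar's, extended to wedge products by determinants
   and sesquilinearly (linear in the first argument). *)
Definition basis_ip (h : 'M[R[i]]_n) (I J K L : {set 'I_n}) : R[i] :=
  subdet (\matrix_(j, k) (invmx h) k j) I K * subdet (invmx h) J L.

Definition ip (h : 'M[R[i]]_n) (a b : cform) : R[i] :=
  \sum_(I : {set 'I_n}) \sum_(J : {set 'I_n}) \sum_(K : {set 'I_n})
    \sum_(L : {set 'I_n}) a I J * (b K L)^* * basis_ip h I J K L.

End Forms.

Definition smooth_on (R : realType) (eps : R) (f : R -> R) : Prop :=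
  forall (k : nat) (t : R), - eps < t < eps ->
    derivable (iter k (fun g => derive1 g) f) t 1.

Definition dform0 (R : realType) (n : nat) (a : R -> cform R n) : cform R n :=
  fun I J => ((derive1 (fun t => complex.Re (a t I J)) 0)%:C
              + 'i * (derive1 (fun t => complex.Im (a t I J)) 0)%:C)%C.

(* Main.v *)
Require Import Defs.
From mathcomp Require Import all_boot all_algebra.
From mathcomp Require Import complex.
From mathcomp Require Import all_classical all_reals all_analysis.
From mathcomp Require Import zify ring lra.
Set Implicit Arguments. Unset Strict Implicit. Unset Printing Implicit Defensive.
Import GRing.Theory Num.Theory.
Local Open Scope ring_scope.

Section Comb.
Variables (R : realType) (n : nat).
Definition ltO (x y : 'I_n) := (val x < val y)%N.

Lemma sorted_enum_set (A : {set 'I_n}) : sorted ltO (enum A).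
Proof.
rewrite /enum_mem -enumT.
have : sorted ltO (enum 'I_n).
  by have := iota_ltn_sorted 0 n; rewrite -val_enum_ord sorted_map.
by apply: sorted_filter => x y z; apply: ltn_trans.
Qed.

Lemma ltO_trans : transitive ltO. Proof. by move=> x y z; apply: ltn_trans. Qed.
Lemma ltO_irr : irreflexive ltO. Proof. by move=> x; rewrite /ltO ltnn. Qed.

Lemma rem_enum (j : 'I_n) (I : {set 'I_n}) : j \notin I ->
  rem j (enum (j |: I)) = enum I.
Proof.
move=> jI; apply: (irr_sorted_eq ltO_trans ltO_irr).
- exact: (subseq_sorted ltO_trans (rem_subseq _ _) (sorted_enum_set _)).
- exact: sorted_enum_set.
move=> x; rewrite mem_rem_uniq ?enum_uniq // !inE !mem_enum !inE.
by case: eqP => // ->; rewrite (negbTE jI).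
Qed.

Lemma index_sorted (j : 'I_n) (s : seq 'I_n) : sorted ltO s -> j \in s ->
  index j s = count (fun x => ltO x j) s.
Proof.
elim: s => //= y s IH Hs; rewrite inE.
have Hs' := path_sorted Hs.
have Hall : all (ltO y) s := order_path_min ltO_trans Hs.
case: (eqVneq y j) => [<-|ne] /=.
  move=> _; rewrite ltO_irr add0n; apply/esym/eqP; rewrite -leqn0 leqNgt -has_count.
  apply/hasPn => x xs; move/allP: Hall => /(_ x xs); rewrite /ltO => lt.
  by rewrite -leqNgt ltnW.
rewrite ?(negbTE ne) /= => js.
rewrite IH //.
by move/allP: Hall => /(_ j js) ->.
Qed.

Definition sgn (j : 'I_n) (A : {set 'I_n}) : R[i] := (-1) ^+ #|[set x in A | ltO x j]|.

Lemma count_enum_card (P : pred 'I_n) (A : {set 'I_n}) :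
  count P (enum A) = #|[set x in A | P x]|.
Proof.
rewrite cardE /enum_mem size_filter count_filter; apply: eq_count => x.
by rewrite !inE andbC.
Qed.

Lemma index_enumU1 (j : 'I_n) (I : {set 'I_n}) : j \notin I ->
  index j (enum (j |: I)) = #|[set x in I | ltO x j]|.
Proof.
move=> jI; rewrite index_sorted ?sorted_enum_set ?mem_enum ?setU11 //.
have jin : j \in enum (j |: I) by rewrite mem_enum setU11.
rewrite (permP (perm_to_rem jin)) rem_enum //= ltO_irr add0n.
exact: count_enum_card.
Qed.

Definition rmat (p : nat) (s : seq 'I_n) := take p s ++ drop p.+1 s.

Lemma nth_rmat x0 p s i : nth x0 (rmat p s) i = nth x0 s (bump p i).
Proof.
rewrite /rmat nth_cat size_take /bump.
case: (ltnP p (size s)) => hp.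
  case: (ltnP i p) => hi.
    by rewrite nth_take // add0n.
  by rewrite nth_drop; congr nth; rewrite /=; lia.
case: (ltnP i (size s)) => hi.
  by rewrite nth_take ?(leq_trans hi hp) // leqNgt (leq_trans hi hp).
rewrite !nth_default ?size_drop //; try lia.
Qed.

Lemma rem_rmat (j : 'I_n) s : rem j s = rmat (index j s) s.
Proof. by rewrite remE. Qed.

Definition subm (x0 : 'I_n) (G : 'M[R[i]]_n) (s1 s2 : seq 'I_n) m : 'M[R[i]]_m :=
  \matrix_(a < m, b < m) G (nth x0 s1 a) (nth x0 s2 b).

Lemma subdetE x0 (G : 'M[R[i]]_n) (I K : {set 'I_n}) m : #|I| = m -> #|K| = m ->
  subdet G I K = \det (subm x0 G (enum I) (enum K) m).
Proof.
move=> eI eK; subst m; rewrite /subdet; case: eqP => [e|]; last by rewrite eK.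
congr (\det _); apply/matrixP => a b; rewrite !mxE !(enum_val_nth x0) //.
Qed.

Lemma subdet0 (G : 'M[R[i]]_n) (I K : {set 'I_n}) : #|I| != #|K| -> subdet G I K = 0.
Proof. by rewrite /subdet; case: eqP. Qed.

Lemma subm_expand x0 (G : 'M[R[i]]_n) s1 s2 m (p : 'I_m.+1) :
  \det (subm x0 G s1 s2 m.+1) = \sum_(q < m.+1)
    G (nth x0 s1 p) (nth x0 s2 q) * (-1) ^+ (p + q)
      * \det (subm x0 G (rmat p s1) (rmat q s2) m).
Proof.
rewrite (expand_det_row _ p); apply: eq_bigr => q _.
rewrite /cofactor !mxE mulrA; congr (_ * \det _).
by apply/matrixP => a b; rewrite !mxE !nth_rmat.
Qed.

Lemma sign_sq p : (-1) ^+ p * (-1) ^+ p = 1 :> R[i].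
Proof. by rewrite -exprMn mulrNN mulr1 expr1n. Qed.

Lemma sum_set_nth (K : {set 'I_n}) m (x0 : 'I_n) (F : 'I_n -> R[i]) : #|K| = m ->
  \sum_(a in K) F a = \sum_(q < m) F (nth x0 (enum K) q).
Proof.
move=> eK; rewrite -big_enum (big_nth x0) -cardE eK big_mkord.
by apply: eq_bigr.
Qed.

Lemma GL (G : 'M[R[i]]_n) (j : 'I_n) (I K : {set 'I_n}) :
  \sum_(a in K) sgn a (K :\ a) * G j a * subdet G I (K :\ a)
  = if j \in I then 0 else sgn j I * subdet G (j |: I) K.
Proof.
have cK : forall a, a \in K -> #|K :\ a| = #|K|.-1.
  by move=> a aK; rewrite (cardsD1 a K) aK.
case: (eqVneq #|K| #|I|.+1) => hK; last first.
  rewrite big1 => [|a aK]; last first.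
    rewrite subdet0 ?mulr0 // cK //; apply: contra hK => /eqP ->.
    rewrite prednK //; apply/card_gt0P; by exists a.
  case: ifP => // jI; rewrite subdet0 ?mulr0 // cardsU1 jI eq_sym //.
set m := #|I|.
rewrite (sum_set_nth j _ hK).
have key : forall q : 'I_m.+1,
  let a := nth j (enum K) q in
  sgn a (K :\ a) * G j a * subdet G I (K :\ a)
  = G j a * (-1) ^+ q * \det (subm j G (enum I) (rmat q (enum K)) m).
  move=> q a.
  have qs : (q < size (enum K))%N by rewrite -cardE hK.
  have aK : a \in K by rewrite -mem_enum mem_nth.
  have aD : a \notin K :\ a by rewrite !inE eqxx.
  have iq : index a (enum K) = q by rewrite index_uniq // enum_uniq.
  have eD : enum (K :\ a) = rmat q (enum K).
    by rewrite -(rem_enum aD) finset.setD1K // rem_rmat iq.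
  have sD : sgn a (K :\ a) = (-1) ^+ q.
    by rewrite /sgn -index_enumU1 // finset.setD1K // iq.
  rewrite sD (@subdetE j G I (K :\ a) m) //; last by rewrite cK // hK.
  by rewrite eD [(-1) ^+ q * _]mulrC.
rewrite (eq_bigr _ (fun q _ => key q)).
case: ifP => jI.
  have jsz : (index j (enum I) < m)%N by rewrite /m cardE index_mem mem_enum.
  have := subm_expand j G (j :: enum I) (enum K) (ord0 : 'I_m.+1).
  rewrite /= => E.
  rewrite [RHS](_ : 0 = \det (subm j G (j :: enum I) (enum K) m.+1)).
    rewrite E; apply: eq_bigr => q _; rewrite /rmat /= drop0 add0n.
    by [].
  symmetry; apply: (determinant_alternate (i1 := ord0) (i2 := inord (index j (enum I)).+1)).
    by rewrite -val_eqE /= inordK.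
  by move=> b; rewrite !mxE inordK //= nth_index // mem_enum.
have jI' : j \notin I by rewrite jI.
have cU : #|j |: I| = m.+1 by rewrite cardsU1 jI'.
have pl : (index j (enum (j |: I)) < m.+1)%N by rewrite -cU cardE index_mem mem_enum setU11.
rewrite (@subdetE j G (j |: I) K m.+1) // (subm_expand _ _ _ _ (inord (index j (enum (j |: I))))).
rewrite inordK // nth_index ?mem_enum ?setU11 // -rem_rmat rem_enum //.
rewrite /sgn -index_enumU1 // big_distrr /=; apply: eq_bigr => q _.
rewrite exprD !mulrA [_ * G j _]mulrC -!mulrA; congr (_ * _).
by rewrite !mulrA sign_sq mul1r.
Qed.
End Comb.

Section Adj.
Variables (R : realType) (n : nat).
Implicit Types (I J K L : {set 'I_n}).

Lemma R1 (j : 'I_n) (F : {set 'I_n} -> R[i]) :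
  \sum_(I : {set 'I_n} | j \in I) F I = \sum_(I : {set 'I_n} | j \notin I) F (j |: I).
Proof.
rewrite (reindex_onto (fun I => j |: I) (fun I => I :\ j)) /=.
  apply: eq_bigl => I; rewrite setU11 /=.
  case: (boolP (j \in I)) => jI; last by rewrite finset.setU1K // eqxx.
  by apply/negbTE/eqP => E; move: jI; rewrite -E !inE eqxx.
by move=> I jI; rewrite finset.setD1K.
Qed.

Lemma sgn_conj (j : 'I_n) A : (sgn R j A)^* = sgn R j A.
Proof. by rewrite /sgn rmorphXn rmorphN1. Qed.

Definition ef (j : 'I_n) (f : {set 'I_n} -> R[i]) I : R[i] :=
  if j \in I then sgn R j (I :\ j) * f (I :\ j) else 0.
Definition estar (G : 'M[R[i]]_n) (j : 'I_n) (g : {set 'I_n} -> R[i]) K : R[i] :=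
  \sum_a (if a \in K then 0 else (G j a)^* * sgn R a K * g (a |: K)).

Lemma ef_sum (G : 'M[R[i]]_n) j f K :
  \sum_(I : {set 'I_n}) ef j f I * subdet G I K =
  \sum_(I : {set 'I_n}) f I * \sum_(a in K) sgn R a (K :\ a) * G j a * subdet G I (K :\ a).
Proof.
rewrite (bigID (fun I => j \in I)) /= [X in _ + X]big1 ?addr0; last first.
  by move=> I /negbTE jI; rewrite /ef jI mul0r.
rewrite R1; under eq_bigr => I _ do rewrite GL.
rewrite [RHS](bigID (fun I => j \in I)) /= [X in _ = X + _]big1 ?add0r; last first.
  by move=> I ->; rewrite mulr0.
apply: eq_bigr => I /negbTE jI; rewrite /ef setU11 finset.setU1K ?jI //.
by rewrite mulrA [sgn R j I * f I]mulrC.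
Qed.

Lemma adj1 (G : 'M[R[i]]_n) j f g :
  \sum_(I : {set 'I_n}) \sum_(K : {set 'I_n}) ef j f I * (g K)^* * subdet G I K
  = \sum_(I : {set 'I_n}) \sum_(K : {set 'I_n}) f I * (estar G j g K)^* * subdet G I K.
Proof.
rewrite exchange_big /=.
under eq_bigr => K _.
  under eq_bigr => I _ do rewrite mulrAC.
  rewrite -big_distrl /= ef_sum big_distrl /=.
  over.
rewrite exchange_big /=; apply: eq_bigr => I _.
transitivity (f I * \sum_(K : {set 'I_n}) (g K)^* *
   \sum_(a in K) sgn R a (K :\ a) * G j a * subdet G I (K :\ a)).
  by rewrite big_distrr; apply: eq_bigr => K _; rewrite /= -mulrA; congr (_ * _); exact: mulrC.
transitivity (f I * \sum_(K : {set 'I_n}) (estar G j g K)^* * subdet G I K); last first.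
  by rewrite big_distrr /=; apply: eq_bigr => K _; rewrite mulrA.
congr (_ * _).
under eq_bigr => K _ do rewrite big_distrr /=.
under [RHS]eq_bigr => K _ do rewrite /estar rmorph_sum big_distrl /=.
rewrite [RHS]exchange_big /=.
under eq_bigr => K _ do rewrite big_mkcond /=.
rewrite exchange_big /=; apply: eq_bigr => a _.
rewrite -big_mkcond /= R1 [RHS](bigID (fun K => a \in K)) /= [X in _ = X + _]big1 ?add0r; last first.
  by move=> K ->; rewrite rmorph0 mul0r.
apply: eq_bigr => K aK; rewrite (negbTE aK) finset.setU1K //.
rewrite !rmorphM /= sgn_conj conjCK.
by ring.
Qed.

Definition HT (h : 'M[R[i]]_n) : 'M[R[i]]_n := \matrix_(j, k) (invmx h) k j.

Lemma ipW (h : 'M[R[i]]_n) (a b : cform R n) : ip h a b =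
  \sum_(I : {set 'I_n}) \sum_(J : {set 'I_n}) a I J *
    \sum_(K : {set 'I_n}) \sum_(L : {set 'I_n}) (b K L)^* * basis_ip h I J K L.
Proof.
rewrite /ip; apply: eq_bigr => I _; apply: eq_bigr => J _.
rewrite big_distrr; apply: eq_bigr => K _; rewrite /= big_distrr; apply: eq_bigr => L _.
by rewrite -mulrA.
Qed.

Lemma ip_swapIK (h : 'M[R[i]]_n) (a b : cform R n) : ip h a b =
  \sum_(K : {set 'I_n}) \sum_(L : {set 'I_n}) \sum_(I : {set 'I_n}) \sum_(J : {set 'I_n})
     a I J * (b K L)^* * basis_ip h I J K L.
Proof.
rewrite /ip; under eq_bigr => I _ do rewrite exchange_big /=.
rewrite exchange_big /=; apply: eq_bigr => K _.
under eq_bigr => I _ do rewrite exchange_big /=.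
by rewrite exchange_big.
Qed.

Lemma ipV (h : 'M[R[i]]_n) (a b : cform R n) : ip h a b =
  \sum_(K : {set 'I_n}) \sum_(L : {set 'I_n}) (b K L)^* *
    \sum_(I : {set 'I_n}) \sum_(J : {set 'I_n}) a I J * basis_ip h I J K L.
Proof.
rewrite ip_swapIK; apply: eq_bigr => K _; apply: eq_bigr => L _.
rewrite big_distrr; apply: eq_bigr => I _; rewrite /= big_distrr; apply: eq_bigr => J _.
by rewrite [a I J * _]mulrC -mulrA.
Qed.

Lemma ipE1 (h : 'M[R[i]]_n) (a b : cform R n) : ip h a b =
  \sum_(J : {set 'I_n}) \sum_(L : {set 'I_n})
    (\sum_(I : {set 'I_n}) \sum_(K : {set 'I_n}) a I J * (b K L)^* * subdet (HT h) I K)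
    * subdet (invmx h) J L.
Proof.
rewrite /ip exchange_big /=; apply: eq_bigr => J _.
under eq_bigr => I _ do rewrite exchange_big /=.
rewrite exchange_big /=; apply: eq_bigr => L _.
rewrite big_distrl; apply: eq_bigr => I _; rewrite /= big_distrl; apply: eq_bigr => K _.
by rewrite /basis_ip mulrA.
Qed.

Lemma ipE2 (h : 'M[R[i]]_n) (a b : cform R n) : ip h a b =
  \sum_(I : {set 'I_n}) \sum_(K : {set 'I_n})
    (\sum_(J : {set 'I_n}) \sum_(L : {set 'I_n}) a I J * (b K L)^* * subdet (invmx h) J L)
    * subdet (HT h) I K.
Proof.
rewrite /ip; apply: eq_bigr => I _.
rewrite exchange_big /=; apply: eq_bigr => K _.
rewrite big_distrl; apply: eq_bigr => J _; rewrite /= big_distrl; apply: eq_bigr => L _.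
by rewrite /basis_ip /HT [subdet _ I K * _]mulrC mulrA.
Qed.

Definition Ef (j : 'I_n) (u : cform R n) : cform R n := fun I J => ef j (fun I' => u I' J) I.
Definition Ff (k : 'I_n) (u : cform R n) : cform R n := fun I J => (-1) ^+ #|I| * ef k (u I) J.
Definition Es (h : 'M[R[i]]_n) (j : 'I_n) (v : cform R n) : cform R n :=
  fun K L => estar (HT h) j (fun K' => v K' L) K.
Definition Fs (h : 'M[R[i]]_n) (k : 'I_n) (v : cform R n) : cform R n :=
  fun K L => (-1) ^+ #|K| * estar (invmx h) k (v K) L.

Lemma adjE h j u v : ip h (Ef j u) v = ip h u (Es h j v).
Proof.
rewrite !ipE1; apply: eq_bigr => J _; apply: eq_bigr => L _; congr (_ * _).
exact: adj1.
Qed.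

Lemma adjF h k u v : ip h (Ff k u) v = ip h u (Fs h k v).
Proof.
rewrite !ipE2; apply: eq_bigr => I _; apply: eq_bigr => K _.
case: (eqVneq #|I| #|K|) => e; last by rewrite subdet0 // !mulr0.
congr (_ * _).
transitivity ((-1) ^+ #|I| * \sum_(J : {set 'I_n}) \sum_(L : {set 'I_n})
   ef k (u I) J * (v K L)^* * subdet (invmx h) J L).
  rewrite big_distrr; apply: eq_bigr => J _; rewrite /= big_distrr; apply: eq_bigr => L _.
  by rewrite /= /Ff !mulrA.
rewrite adj1 big_distrr; apply: eq_bigr => J _; rewrite /= big_distrr; apply: eq_bigr => L _.
rewrite /= /Fs rmorphM /= rmorphXn rmorphN1 e.
by ring.
Qed.

Lemma shsign1 (j : 'I_n) (A : {set 'I_n}) : shsign R [set j] A = sgn R j A.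
Proof.
rewrite /shsign /sgn.
have -> : [set xy : 'I_n * 'I_n | [&& xy.1 \in [set j], xy.2 \in A & (val xy.2 < val xy.1)%N]]
   = (pair j) @: [set x in A | ltO x j].
  apply/setP => -[x y]; rewrite !inE /=; apply/idP/imsetP.
  - case/and3P => /eqP -> yA lt; exists y => //; by rewrite !inE yA.
  - by case=> z; rewrite !inE => /andP[zA lt] [-> ->]; rewrite eqxx zA.
by rewrite card_imset // => a b [].
Qed.

Lemma sum_delta (T : finType) (P : pred T) (b : T) (F : T -> R[i]) :
  \sum_(x | P x) (if x == b then F x else 0) = if P b then F b else 0.
Proof.
rewrite -big_mkcondr; case: (boolP (P b)) => Pb.
  by rewrite (big_pred1 b) // => x; rewrite /=; case: eqP => [->|_]; rewrite ?Pb ?andbF.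
by rewrite big_pred0 // => x; case: eqP => [->|_]; rewrite ?andbF // andbT (negbTE Pb).
Qed.

Lemma wedge_form11 (X : 'M[R[i]]_n) (u : cform R n) I J :
  wedge (form11 X) u I J = \sum_j \sum_k 'i * X j k * Ef j (Ff k u) I J.
Proof.
rewrite /wedge /form11.
transitivity (\sum_(I1 : {set 'I_n} | I1 \subset I) \sum_(J1 : {set 'I_n} | J1 \subset J)
  \sum_j \sum_k (if I1 == [set j] then (if J1 == [set k] then
    shsign R I1 (I :\: I1) * shsign R J1 (J :\: J1) * (-1) ^+ (#|J1| * #|I :\: I1|)
    * ('i * X j k) * u (I :\: I1) (J :\: J1) else 0) else 0)).
  apply: eq_bigr => I1 _; apply: eq_bigr => J1 _.
  rewrite big_distrr big_distrl /=; apply: eq_bigr => j _.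
  rewrite big_distrr big_distrl /=; apply: eq_bigr => k _.
  by case: eqP => _; case: eqP => _ /=; rewrite ?mulr0 ?mul0r.
under eq_bigr => I1 _ do rewrite exchange_big /=.
rewrite exchange_big /=; apply: eq_bigr => j _.
under eq_bigr => I1 _ do rewrite exchange_big /=.
rewrite exchange_big /=; apply: eq_bigr => k _.
transitivity (\sum_(I1 : {set 'I_n} | I1 \subset I) if I1 == [set j] then
  \sum_(J1 : {set 'I_n} | J1 \subset J) (if J1 == [set k] then
    shsign R I1 (I :\: I1) * shsign R J1 (J :\: J1) * (-1) ^+ (#|J1| * #|I :\: I1|)
    * ('i * X j k) * u (I :\: I1) (J :\: J1) else 0) else 0).
  apply: eq_bigr => I1 _; case: eqP => // _; by rewrite big1.
rewrite sum_delta sum_delta !finset.sub1set /Ef /Ff /ef.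
case: (j \in I); case: (k \in J); rewrite ?mulr0 //.
rewrite !shsign1 cards1 mul1n.
by ring.
Qed.

Lemma ip_sum (T : finType) h (w : T -> cform R n) v :
  ip h (fun I J => \sum_x w x I J) v = \sum_x ip h (w x) v.
Proof.
rewrite ipW.
under eq_bigr => I _ do under eq_bigr => J _ do rewrite big_distrl.
under eq_bigr => I _ do rewrite exchange_big.
rewrite exchange_big; apply: eq_bigr => x _.
by rewrite ipW.
Qed.

Lemma ip_scal h (c : R[i]) (w : cform R n) v :
  ip h (fun I J => c * w I J) v = c * ip h w v.
Proof.
rewrite !ipW big_distrr; apply: eq_bigr => I _; rewrite /= big_distrr.
by apply: eq_bigr => J _; rewrite /= mulrA.
Qed.

Lemma ip_sumr (T : finType) h u (w : T -> cform R n) :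
  ip h u (fun K L => \sum_x w x K L) = \sum_x ip h u (w x).
Proof.
rewrite ipV.
under eq_bigr => I _ do under eq_bigr => J _ do rewrite rmorph_sum big_distrl.
under eq_bigr => I _ do rewrite exchange_big.
rewrite exchange_big; apply: eq_bigr => x _.
by rewrite ipV.
Qed.

Lemma ip_scalr h (c : R[i]) u (w : cform R n) :
  ip h u (fun K L => c * w K L) = c^* * ip h u w.
Proof.
rewrite !ipV big_distrr; apply: eq_bigr => I _; rewrite /= big_distrr.
by apply: eq_bigr => J _; rewrite /= rmorphM mulrA.
Qed.

Definition Astar h (X : 'M[R[i]]_n) (v : cform R n) : cform R n :=
  fun K L => \sum_j \sum_k ('i * X j k)^* * Fs h k (Es h j v) K L.

Lemma adjW h X u v : ip h (wedge (form11 X) u) v = ip h u (Astar h X v).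
Proof.
have -> : wedge (form11 X) u = fun I J => \sum_j \sum_k 'i * X j k * Ef j (Ff k u) I J.
  by apply: funext => I; apply: funext => J; rewrite wedge_form11.
rewrite (ip_sum h (fun j I J => \sum_k 'i * X j k * Ef j (Ff k u) I J)).
rewrite /Astar (ip_sumr h u (fun j K L => \sum_k ('i * X j k)^* * Fs h k (Es h j v) K L)).
apply: eq_bigr => j _.
rewrite (ip_sum h (fun k I J => 'i * X j k * Ef j (Ff k u) I J)).
rewrite (ip_sumr h u (fun k K L => ('i * X j k)^* * Fs h k (Es h j v) K L)).
apply: eq_bigr => k _.
rewrite (ip_scal h ('i * X j k) (Ef j (Ff k u))) ip_scalr conjCK.
by rewrite adjE adjF.
Qed.

Definition Tf (a b : 'I_n) (v : cform R n) : cform R n := fun K L =>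
  if (a \in K) || (b \in L) then 0
  else (-1) ^+ #|K| * sgn R a K * sgn R b L * v (a |: K) (b |: L).

Lemma AstarE h X v K L : Astar h X v K L =
  \sum_a \sum_b ('i * (invmx h *m X *m invmx h) a b)^* * Tf a b v K L.
Proof.
pose H := invmx h.
pose Phi j k a b := ('i * X j k)^* * (H k b)^* * (H a j)^* * Tf a b v K L.
transitivity (\sum_j \sum_k \sum_a \sum_b Phi j k a b).
  rewrite /Astar; apply: eq_bigr => j _; apply: eq_bigr => k _.
  rewrite exchange_big /= /Fs /estar big_distrr /= big_distrr /=.
  apply: eq_bigr => b _.
  rewrite /Es /estar.
  case: (boolP (b \in L)) => bL.
    by rewrite mulr0 mulr0; apply/esym/big1 => a _; rewrite /Phi /Tf bL orbT mulr0.
  rewrite !big_distrr /=; apply: eq_bigr => a _.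
  rewrite /Phi /Tf (negbTE bL) orbF /HT.
  case: (boolP (a \in K)) => aK; first by rewrite !mulr0.
  by rewrite !mxE; ring.
apply/esym.
under eq_bigr => a _ do under eq_bigr => b _ do
  rewrite !mxE rmorphM rmorph_sum big_distrr big_distrl /=.
transitivity (\sum_a \sum_b \sum_k \sum_j Phi j k a b).
  apply: eq_bigr => a _; apply: eq_bigr => b _; apply: eq_bigr => k _.
  rewrite !mxE big_distrl /= rmorph_sum big_distrr /= big_distrl /=.
  by apply: eq_bigr => j _; rewrite /Phi !rmorphM /=; ring.
under eq_bigr => a _ do under eq_bigr => b _ do rewrite exchange_big.
under eq_bigr => a _ do rewrite exchange_big.
rewrite exchange_big; apply: eq_bigr => j _.
under eq_bigr => a _ do rewrite exchange_big.
by rewrite exchange_big.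
Qed.

Lemma posdef_unit (h : 'M[R[i]]_n) : is_posdef h -> h \in unitmx.
Proof.
move=> hp; rewrite unitmxE unitfE; apply/negP => /det0P [v v0 vh].
have : exists j, v 0 j != 0.
  apply/existsP; apply: contraR v0; rewrite negb_exists => /forallP H0.
  by apply/eqP/rowP => j; rewrite mxE; move/negPn: (H0 j) => /eqP.
move=> /(hp (fun j => v 0 j)); rewrite exchange_big /=.
rewrite (eq_bigr (fun k => (v *m h) 0 k * (v 0 k)^*)).
  by rewrite vh big1; [rewrite preorder.Order.PreorderTheory.ltxx | move=> k _; rewrite mxE mul0r].
move=> k _; rewrite mxE big_distrl /=; apply: eq_bigr => j _.
by rewrite [h j k * _]mulrC.
Qed.

Lemma vec0 (M : 'M[R[i]]_n) (z : 'I_n -> R[i]) : M \in unitmx ->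
  (forall j, \sum_b M b j * z b = 0) -> forall b, z b = 0.
Proof.
move=> Mu H0 b.
pose zr : 'rV[R[i]]_n := \row_b z b.
have : zr *m M = 0.
  by apply/rowP => j; rewrite !mxE -[RHS](H0 j); apply: eq_bigr => c _; rewrite mxE mulrC.
move=> /(congr1 (fun A => A *m invmx M)); rewrite mulmxK // mul0mx => /rowP /(_ b).
by rewrite !mxE.
Qed.

Lemma vec0c (M : 'M[R[i]]_n) (z : 'I_n -> R[i]) : M \in unitmx ->
  (forall j, \sum_b (M b j)^* * z b = 0) -> forall b, z b = 0.
Proof.
move=> Mu H0 b; apply/eqP; rewrite -conjC_eq0; apply/eqP.
apply: (vec0 (z := fun b => (z b)^*) Mu) => j.
have := congr1 (fun x => x^*) (H0 j); rewrite /= rmorph0 rmorph_sum => E.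
rewrite -[RHS]E; apply: eq_bigr => c _; rewrite rmorphM /= conjCK. by [].
Qed.

Lemma sum_ind (T : finType) (b : T) (F : T -> R[i]) :
  \sum_(x : T) (x == b)%:R * F x = F b.
Proof.
rewrite (bigD1 b) //= eqxx mul1r big1 ?addr0 // => x /negbTE ->.
by rewrite mul0r.
Qed.

Lemma det_card0 m (A : 'M[R[i]]_m) : m = 0%N -> \det A = 1.
Proof. by move=> em; subst m; exact: det_mx00. Qed.

Lemma set0_nil : forall K : {set 'I_n}, #|K| = 0%N -> K = finset.set0.
Proof. by move=> K /eqP; rewrite cards_eq0 => /eqP. Qed.

Lemma subdet_set0 (G : 'M[R[i]]_n) K : subdet G finset.set0 K = (K == finset.set0)%:R.
Proof.
case: (eqVneq K finset.set0) => [->|K0].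
  rewrite /subdet; case: eqP => [e|]; last by rewrite cards0.
  by apply: det_card0; rewrite cards0.
by rewrite subdet0 // cards0 eq_sym cards_eq0.
Qed.

Lemma nondeg (h : 'M[R[i]]_n) (w : cform R n) : h \in unitmx ->
  (forall u, ip h u w = 0) -> forall K L, w K L = 0.
Proof.
move=> hu.
suff S : forall d (w : cform R n), (forall u, ip h u w = 0) ->
  forall K L, (#|K| + #|L|)%N = d -> w K L = 0.
  by move=> Hw K L; apply: (S _ w Hw K L erefl).
elim=> [|d IH] {}w Hw K L.
  move=> /eqP; rewrite addn_eq0 => /andP[/eqP/set0_nil -> /eqP/set0_nil ->].
  have := Hw (fun I J => (I == finset.set0)%:R * (J == finset.set0)%:R).
  rewrite ipW.
  under eq_bigr => I _ do under eq_bigr => J _ do rewrite -mulrA.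
  under eq_bigr => I _ do rewrite -big_distrr /=.
  rewrite sum_ind sum_ind.
  under eq_bigr => K1 _ do under eq_bigr => L1 _ do
    rewrite /basis_ip !subdet_set0 mulrC -mulrA.
  under eq_bigr => K1 _ do rewrite -big_distrr /=.
  rewrite sum_ind sum_ind.
  by move=> /eqP; rewrite conjC_eq0 => /eqP.
move=> eKL.
have sgn0 : forall (c : 'I_n) A, sgn R c A != 0 by move=> c A; rewrite /sgn signr_eq0.
case: (set_0Vmem K) => [K0|[a aK]].
  have : (0 < #|L|)%N by move: eKL; rewrite K0 cards0; lia.
  rewrite finset.card_gt0 => /set0Pn [b bL].
  have Hk : forall k, Fs h k w K (L :\ b) = 0.
    move=> k; apply: (IH (Fs h k w)).
      by move=> u; rewrite -adjF.
    by move: eKL; rewrite (cardsD1 b L) bL; lia.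
  have := vec0c (M := (invmx h)^T)
     (z := fun c => if c \in L :\ b then 0 else sgn R c (L :\ b) * w K (c |: (L :\ b))).
  rewrite unitmx_tr unitmx_inv => /(_ hu).
  have Hz : forall k, \sum_c (((invmx h)^T) c k)^* *
     (if c \in L :\ b then 0 else sgn R c (L :\ b) * w K (c |: (L :\ b))) = 0.
    move=> k; have := Hk k; rewrite /Fs => /eqP; rewrite mulf_eq0 signr_eq0 /= => /eqP E.
    rewrite -[RHS]E /estar; apply: eq_bigr => c _; rewrite mxE.
    by case: (c \in L :\ b); rewrite ?mulr0 // mulrA.
  move=> /(_ Hz b); rewrite !inE eqxx /= finset.setD1K // => /eqP.
  by rewrite mulf_eq0 (negbTE (sgn0 _ _)) /= => /eqP.
have Hj : forall j, Es h j w (K :\ a) L = 0.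
  move=> j; apply: (IH (Es h j w)).
    by move=> u; rewrite -adjE.
  by move: eKL; rewrite (cardsD1 a K) aK; lia.
have := vec0c (M := invmx h)
   (z := fun c => if c \in K :\ a then 0 else sgn R c (K :\ a) * w (c |: (K :\ a)) L).
rewrite unitmx_inv => /(_ hu).
have Hz : forall j, \sum_c ((invmx h) c j)^* *
   (if c \in K :\ a then 0 else sgn R c (K :\ a) * w (c |: (K :\ a)) L) = 0.
  move=> j; rewrite -[RHS](Hj j) /Es /estar; apply: eq_bigr => c _; rewrite /HT mxE.
  by case: (c \in K :\ a); rewrite ?mulr0 // mulrA.
move=> /(_ Hz a); rewrite !inE eqxx /= finset.setD1K // => /eqP.
by rewrite mulf_eq0 (negbTE (sgn0 _ _)) /= => /eqP.
Qed.

End Adj.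
From mathcomp Require Import fingroup perm.

Section Calc.
Variable R : realType.
Local Open Scope complex_scope.

Lemma cReD (x y : R[i]) : complex.Re (x + y) = complex.Re x + complex.Re y. Proof. by case: x; case: y. Qed.
Lemma cImD (x y : R[i]) : complex.Im (x + y) = complex.Im x + complex.Im y. Proof. by case: x; case: y. Qed.
Lemma cReM (x y : R[i]) : complex.Re (x * y) = complex.Re x * complex.Re y - complex.Im x * complex.Im y.
Proof. by case: x; case: y. Qed.
Lemma cImM (x y : R[i]) : complex.Im (x * y) = complex.Re x * complex.Im y + complex.Im x * complex.Re y.
Proof. by case: x => a b; case: y => c d /=; ring. Qed.
Lemma cReC (x : R[i]) : complex.Re (x^*)%R = complex.Re x. Proof. by case: x. Qed.
Lemma cImC (x : R[i]) : complex.Im (x^*)%R = - complex.Im x. Proof. by case: x. Qed.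
Lemma cReV (x : R[i]) : complex.Re (x^-1)%R = complex.Re x / (complex.Re x ^+ 2 + complex.Im x ^+ 2).
Proof. by case: x. Qed.
Lemma cImV (x : R[i]) : complex.Im (x^-1)%R = - (complex.Im x / (complex.Re x ^+ 2 + complex.Im x ^+ 2)).
Proof. by case: x. Qed.

Definition CD (f : R -> R[i]) (c : R[i]) :=
  is_derive (0 : R) (1 : R) (fun t => complex.Re (f t)) (complex.Re c) /\
  is_derive (0 : R) (1 : R) (fun t => complex.Im (f t)) (complex.Im c).

Lemma deq (f g : R -> R) df : (forall t, f t = g t) ->
  is_derive (0 : R) (1 : R) f df -> is_derive (0 : R) (1 : R) g df.
Proof. by move=> fg; have -> : f = g by apply: funext. Qed.

Lemma CD_cst (c : R[i]) : CD (fun _ => c) 0.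
Proof. by split; apply: is_derive_cst. Qed.

Lemma CD_add f g c d : CD f c -> CD g d -> CD (fun t => f t + g t) (c + d).
Proof.
move=> [f1 f2] [g1 g2]; split.
  rewrite cReD; apply: deq (is_deriveD f1 g1) => t /=; by rewrite cReD.
rewrite cImD; apply: deq (is_deriveD f2 g2) => t /=; by rewrite cImD.
Qed.

Lemma CD_mul f g c d : CD f c -> CD g d -> CD (fun t => f t * g t) (f 0 * d + c * g 0).
Proof.
move=> [f1 f2] [g1 g2]; split.
  have := is_deriveB (is_deriveM f1 g1) (is_deriveM f2 g2).
  move=> /deq H; apply: is_derive_eq; first by apply: H => t /=; rewrite cReM.
  by rewrite cReD !cReM /GRing.scale /=; ring.
have := is_deriveD (is_deriveM f1 g2) (is_deriveM f2 g1).
move=> /deq H; apply: is_derive_eq; first by apply: H => t /=; rewrite cImM.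
by rewrite cImD !cImM /GRing.scale /=; ring.
Qed.

Lemma CD_conj f c : CD f c -> CD (fun t => (f t)^*) c^*.
Proof.
move=> [f1 f2]; split.
  by rewrite cReC; apply: deq f1 => t; rewrite cReC.
rewrite cImC; apply: deq (is_deriveN f2) => t /=; by rewrite cImC.
Qed.

Lemma CD_real (r : R -> R) dr : is_derive (0 : R) (1 : R) r dr -> CD (fun t => (r t)%:C) dr%:C.
Proof. by move=> H; split => //=; apply: is_derive_cst. Qed.

Lemma CD_eq f c d : CD f c -> c = d -> CD f d.
Proof. by move=> ? <-. Qed.

Lemma CD_unique f c d : CD f c -> CD f d -> c = d.
Proof.
move=> [f1 f2] [g1 g2]; apply/eqP; rewrite eq_complex; apply/andP; split; apply/eqP.
  by rewrite -(@derive_val _ _ _ _ _ _ _ f1) -(@derive_val _ _ _ _ _ _ _ g1).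
by rewrite -(@derive_val _ _ _ _ _ _ _ f2) -(@derive_val _ _ _ _ _ _ _ g2).
Qed.

Lemma CD_ext f g c : (forall t, f t = g t) -> CD f c -> CD g c.
Proof. by move=> fg; have -> : f = g by apply: funext. Qed.

Lemma CD_near (e : R) (f g : R -> R[i]) c : 0 < e -> (forall t, - e < t < e -> f t = g t) -> CD f c -> CD g c.
Proof.
move=> e0 H [f1 f2].
have Hn : \forall t \near 0, f t = g t.
  apply/nbhs_ballP; exists e => // t /=; rewrite /ball /= sub0r normrN => ht.
  by apply: H; rewrite -ltr_norml.
split; apply: near_eq_is_derive (_ : is_derive _ _ _ _) => //.
- by near=> t; rewrite (near Hn t).
- by near=> t; rewrite (near Hn t).
Unshelve. all: by end_near.
Qed.

Lemma CD_sumL (T : Type) (r : seq T) (P : pred T) (F : T -> R -> R[i]) (c : T -> R[i]) :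
  (forall x, P x -> CD (F x) (c x)) ->
  CD (fun t => \sum_(x <- r | P x) F x t) (\sum_(x <- r | P x) c x).
Proof.
move=> H; elim: r => [|x r IH].
  by rewrite big_nil; apply: CD_ext (CD_cst 0) => t; rewrite big_nil.
rewrite big_cons; case: (boolP (P x)) => Px.
  by apply: CD_ext (CD_add (H x Px) IH) => t; rewrite big_cons Px.
by apply: CD_ext IH => t; rewrite big_cons (negbTE Px).
Qed.

Lemma CD_prodL (T : Type) (r : seq T) (P : pred T) (F : T -> R -> R[i]) :
  (forall x, P x -> exists c, CD (F x) c) ->
  exists c, CD (fun t => \prod_(x <- r | P x) F x t) c.
Proof.
move=> H; elim: r => [|x r [c IH]].
  by exists 0; apply: CD_ext (CD_cst 1) => t; rewrite big_nil.
case: (boolP (P x)) => Px.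
  have [d Hd] := H x Px.
  by eexists; apply: CD_ext (CD_mul Hd IH) => t; rewrite big_cons Px.
by exists c; apply: CD_ext IH => t; rewrite big_cons (negbTE Px).
Qed.

Lemma CD_sumx (T : Type) (r : seq T) (P : pred T) (F : T -> R -> R[i]) :
  (forall x, P x -> exists c, CD (F x) c) ->
  exists c, CD (fun t => \sum_(x <- r | P x) F x t) c.
Proof.
move=> H; elim: r => [|x r [c IH]].
  by exists 0; apply: CD_ext (CD_cst 0) => t; rewrite big_nil.
case: (boolP (P x)) => Px.
  have [d Hd] := H x Px.
  by eexists; apply: CD_ext (CD_add Hd IH) => t; rewrite big_cons Px.
by exists c; apply: CD_ext IH => t; rewrite big_cons (negbTE Px).
Qed.

Lemma CD_t : CD (fun t => t%:C) 1.
Proof. by apply: CD_real; apply: is_derive_id. Qed.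

Lemma CD_det m (M : R -> 'M[R[i]]_m) : (forall i j, exists c, CD (fun t => M t i j) c) ->
  exists c, CD (fun t => \det (M t)) c.
Proof.
move=> H.
have [c Hc] : exists c, CD (fun t => \sum_(s : 'S_m) (-1) ^+ s * \prod_i M t i (s i)) c.
  apply: CD_sumx => s _.
  have [d Hd] : exists d, CD (fun t => \prod_i M t i (s i)) d.
    by apply: CD_prodL => i _; exact: H.
  eexists; exact: (CD_mul (CD_cst _) Hd).
by exists c; apply: CD_ext Hc => t.
Qed.

Lemma CD_of (f : R -> R[i]) p q :
  is_derive (0 : R) (1 : R) (fun t => complex.Re (f t)) p ->
  is_derive (0 : R) (1 : R) (fun t => complex.Im (f t)) q -> CD f (p +i* q).
Proof. by move=> H1 H2; split. Qed.

Lemma CD_inv (f : R -> R[i]) c : CD f c -> f 0 != 0 ->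
  exists d, CD (fun t => (f t)^-1) d.
Proof.
move=> [f1 f2] f0.
pose r := fun t => complex.Re (f t) ^+ 2 + complex.Im (f t) ^+ 2.
have rd : derivable r 0 1.
  have := is_deriveD (is_deriveX 2 f1) (is_deriveX 2 f2).
  by move=> H; exact: (@ex_derive _ _ _ _ _ _ _ H).
have r0 : r 0 != 0.
  rewrite /r; move: f0; case: (f 0) => a b /= ab.
  rewrite paddr_eq0 ?sqr_ge0 // !sqrf_eq0; apply: contra ab => /andP[/eqP -> /eqP ->].
  by [].
have /derivableP ri := derivableV r0 rd.
eexists; apply: CD_of.
  have := is_deriveM f1 ri.
  by apply: deq => t; rewrite cReV.
have := is_deriveN (is_deriveM f2 ri).
by apply: deq => t; rewrite cImV.
Qed.

Lemma CD_entry n (h g : 'M[R[i]]_n) x y :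
  CD (fun t => (h + t%:C *: g) x y) (g x y).
Proof.
apply: CD_ext (CD_eq (CD_add (CD_cst (h x y)) (CD_mul CD_t (CD_cst (g x y)))) _).
  by move=> t; rewrite !mxE.
by rewrite add0r mulr0 add0r mul1r.
Qed.

Lemma CD_invmx n (h g : 'M[R[i]]_n) (e : R) : 0 < e ->
  (forall t, - e < t < e -> (h + t%:C *: g) \in unitmx) ->
  forall a b, CD (fun t => invmx (h + t%:C *: g) a b) (- (invmx h *m g *m invmx h) a b).
Proof.
move=> e0 Hu.
pose M := fun t : R => h + t%:C *: g.
have M0 : M 0 = h by rewrite /M scale0r addr0.
have ex : forall ab : 'I_n * 'I_n, exists d, CD (fun t => invmx (M t) ab.1 ab.2) d.
  move=> [a b] /=.
  have [c1 H1] : exists c, CD (fun t => \det (M t)) c.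
    by apply: CD_det => i j; eexists; apply: CD_entry.
  have [c2 H2] : exists c, CD (fun t => \det (row' b (col' a (M t)))) c.
    by apply: CD_det => i j; eexists; apply: CD_ext (CD_entry h g _ _) => t; rewrite !mxE.
  have H0 : M 0 \in unitmx by apply: Hu; rewrite oppr_lt0 e0.
  have dn : \det (M 0) != 0 by rewrite -unitfE -unitmxE.
  have [c3 H3] := CD_inv H1 dn.
  eexists; apply: (CD_near (e := e)) (CD_mul H3 (CD_mul (CD_cst ((-1) ^+ (b + a))) H2)) => //.
  move=> t ht; rewrite /invmx (Hu t ht) !mxE /cofactor.
  by [].
have [D HD] := boolp.choice ex.
pose Dm := \matrix_(a, b) D (a, b).
have HDm : forall a b, CD (fun t => invmx (M t) a b) (Dm a b).
  by move=> a b; rewrite mxE; exact: (HD (a, b)).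
have key : Dm *m h = - (invmx h *m g).
  apply/matrixP => a b.
  have C1 : CD (fun t => \sum_k invmx (M t) a k * M t k b)
              (\sum_k (invmx h a k * g k b + Dm a k * h k b)).
    apply: CD_sumL => k _.
    by apply: CD_eq (CD_mul (HDm a k) (CD_entry h g k b)) _; rewrite M0 -/(M 0) M0.
  have C2 : CD (fun t => \sum_k invmx (M t) a k * M t k b) 0.
    apply: (CD_near (e := e)) (CD_cst ((1%:M : 'M[R[i]]_n) a b)) => //.
    by move=> t ht; rewrite -(mulVmx (Hu t ht)) mxE.
  have := CD_unique C1 C2; rewrite big_split /= => /eqP; rewrite addr_eq0 => /eqP E.
  have -> : (-(invmx h *m g)) a b = - \sum_k invmx h a k * g k b by rewrite !mxE.
  by rewrite E opprK mxE.
move=> a b.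
have hu : h \in unitmx by rewrite -M0; apply: Hu; rewrite oppr_lt0 e0.
have E2 : Dm = - (invmx h *m g *m invmx h).
  by rewrite -mulNmx -key -mulmxA mulmxV ?mulmx1.
have -> : - (invmx h *m g *m invmx h) a b = Dm a b by rewrite E2 [RHS]mxE.
by have := HDm a b.
Qed.
End Calc.

Lemma ip_subr (R : realType) (n : nat) (h : 'M[R[i]]_n) (u x y : cform R n) :
  ip h u (fun K L => x K L - y K L) = ip h u x - ip h u y.
Proof.
rewrite !ipV -sumrB; apply: eq_bigr => K _; rewrite -sumrB; apply: eq_bigr => L _.
by rewrite rmorphB mulrBl.
Qed.

Unset Implicit Arguments.

Theorem lemma3p5 (R : realType) (n p q : nat) (h g : 'M[complex R]_n) (eps : R)
    (a : R -> cform R n) (Lam : R -> cform R n -> cform R n)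
    (Gstar : cform R n -> cform R n) :
  (* omega = form11 h is a Hermitian metric, gamma = form11 g a real (1,1)-cform *)
  is_hermitian h -> is_posdef h -> is_hermitian g ->
  0 < eps ->
  (forall t, - eps < t < eps -> is_posdef (h + (t%:C)%C *: g)) ->
  (* (a t) is a C^infinity family of (p,q)-forms *)
  (forall t, - eps < t < eps -> is_pq_form p q (a t)) ->
  (forall I J, smooth_on eps (fun t => complex.Re (a t I J))
            /\ smooth_on eps (fun t => complex.Im (a t I J))) ->
  (* Lam t = Lambda_{omega + t gamma}, the adjoint of (omega + t gamma) /\ .
     w.r.t. the inner product induced by omega + t gamma *)
  (forall t, - eps < t < eps -> forall u v : cform R n,
     ip (h + (t%:C)%C *: g) (wedge (form11 (h + (t%:C)%C *: g)) u) v
     = ip (h + (t%:C)%C *: g) u (Lam t v)) ->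
  (* Gstar = (gamma /\ .)^*_omega *)
  (forall u v : cform R n, ip h (wedge (form11 g) u) v = ip h u (Gstar v)) ->
  forall I J : {set 'I_n},
    is_derive (0 : R) (1 : R) (fun t => complex.Re (Lam t (a t) I J))
      (complex.Re (Lam 0 (dform0 a) I J - Gstar (a 0) I J))
    /\ is_derive (0 : R) (1 : R) (fun t => complex.Im (Lam t (a t) I J))
      (complex.Im (Lam 0 (dform0 a) I J - Gstar (a 0) I J)).
Proof.
move=> _ Hp _ e0 Hpt _ Hsm HLam HG I J.
have hu := posdef_unit Hp.
have in0 : - eps < 0 < eps by rewrite oppr_lt0 e0.
have Hut : forall t, - eps < t < eps -> (h + (t%:C)%C *: g) \in unitmx.
  by move=> t ht; apply: posdef_unit; apply: Hpt.
have LamE : forall t, - eps < t < eps -> forall v K L,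
    Lam t v K L = Astar (h + (t%:C)%C *: g) (h + (t%:C)%C *: g) v K L.
  move=> t ht v K L; apply/eqP; rewrite -subr_eq0; apply/eqP.
  apply: (nondeg (Hut t ht) (w := fun K L => Lam t v K L - Astar _ _ v K L)) => u.
  by rewrite ip_subr -HLam // adjW subrr.
have GE : forall v K L, Gstar v K L = Astar h g v K L.
  move=> v K L; apply/eqP; rewrite -subr_eq0; apply/eqP.
  apply: (nondeg hu (w := fun K L => Gstar v K L - Astar _ _ v K L)) => u.
  by rewrite ip_subr -HG adjW subrr.
have AE : forall t, - eps < t < eps -> forall v K L,
    Astar (h + (t%:C)%C *: g) (h + (t%:C)%C *: g) v K L =
    \sum_a \sum_b ('i * invmx (h + (t%:C)%C *: g) a b)^* * Tf a b v K L.
  by move=> t ht v K L; rewrite AstarE mulVmx ?mul1mx //; apply: Hut.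
have CDa : forall X Y, CD (fun t => a t X Y) (dform0 a X Y).
  move=> X Y; have [s1 s2] := Hsm X Y.
  have d1 := s1 0%N 0 in0; have d2 := s2 0%N 0 in0.
  split.
    apply: is_derive_eq (derivableP d1) _.
    by rewrite /dform0 cReD cReM /= derive1E mul0r mulr0 subr0 addr0.
  apply: is_derive_eq (derivableP d2) _.
  by rewrite /dform0 cImD cImM /= derive1E mul0r mul1r !add0r.
have CDT : forall x y, CD (fun t => Tf x y (a t) I J) (Tf x y (dform0 a) I J).
  move=> x y; case: (boolP ((x \in I) || (y \in J))) => c.
    by apply: CD_ext (CD_eq (CD_cst 0) _) => [t|]; rewrite /Tf c.
  apply: CD_ext (CD_eq (CD_mul (CD_cst ((-1) ^+ #|I| * sgn R x I * sgn R y J)) (CDa _ _)) _).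
    by move=> t; rewrite /Tf (negbTE c).
  by rewrite /Tf (negbTE c) mul0r addr0.
have h0 : h + ((0 : R)%:C)%C *: g = h.
  by rewrite (_ : ((0 : R)%:C)%C = 0) ?scale0r ?addr0.
pose V := \sum_x \sum_y (('i * invmx h x y)^* * Tf x y (dform0 a) I J
          + ('i * (- (invmx h *m g *m invmx h) x y))^* * Tf x y (a 0) I J).
have CDPhi : CD (fun t => \sum_x \sum_y ('i * invmx (h + (t%:C)%C *: g) x y)^* * Tf x y (a t) I J) V.
  apply: CD_sumL => x _; apply: CD_sumL => y _.
  apply: CD_eq (CD_mul (CD_conj (CD_mul (CD_cst 'i) (CD_invmx e0 Hut x y))) (CDT x y)) _.
  by rewrite h0 mul0r addr0.
have CDL : CD (fun t => Lam t (a t) I J) V.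
  apply: (CD_near e0) CDPhi => t ht.
  by rewrite LamE // AE.
suff -> : Lam 0 (dform0 a) I J - Gstar (a 0) I J = V by case: CDL.
rewrite LamE // AE // GE AstarE h0 /V.
under [RHS]eq_bigr => x _ do rewrite big_split /=.
rewrite big_split /= -sumrN; congr (_ + _).
apply: eq_bigr => x _; rewrite -sumrN; apply: eq_bigr => y _.
by rewrite mulrN rmorphN mulNr.
Qed.
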